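(* Let $n\ge0$, $\alpha,\beta\in D_n$ and $1\le k\le 2n+1$. Then $\alpha\preccurlyeq\beta$ if and only if $l_k(\alpha)\preccurlyeq l_k(\beta)$.
   Context: $D_n$ is the set of non-crossing perfect matchings of $\{1,\ldots,2n\}$ (non-crossing $n$-chord diagrams), $D_0=\{\phi\}$. For $1\le k\le 2n+1$, $l_k:D_n\to D_{n+1}$: $l_k(\alpha)$ matches $k$ with $k+1$, and each old point $i$ becomes $i$ if $i<k$ and $i+2$ if $i\ge k$, old pairs kept. Restricted sequence of $\alpha\in D_n$ ($n\ge1$): let $k_n$ be the smallest $k$ with $k$ matched to $k+1$ and let $\alpha'$ be $\alpha$ with that arc removed (renumbered); the restricted sequence is $(k_n,k_{n-1},\ldots,k_1)$ where $(k_{n-1},\ldots,k_1)$ is the restricted sequence of $\alpha'$ (empty for $\phi$). Partial order: $\alpha\preccurlyeq\beta$ iff, writing $(a_n,\ldots,a_1)$ and $(b_n,\ldots,b_1)$ for their restricted sequences, $a_i\le b_i$ for all $1\le i\le n$. *)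

(* Defs.v *)
From mathcomp Require Import all_boot.
Set Implicit Arguments. Unset Strict Implicit. Unset Printing Implicit Defensive.

(* A perfect matching of {1,...,2n} is encoded by a sequence [p] of length 2n:
   the partner of point i (1 <= i <= 2n) is the (i-1)-th entry of p. *)
Definition partner (p : seq nat) (i : nat) : nat := nth 0 p i.-1.

Definition is_NCM (n : nat) (p : seq nat) : Prop :=
  size p = 2 * n /\
  (forall i, 1 <= i <= 2 * n ->
     [/\ 1 <= partner p i <= 2 * n, partner p i != i & partner p (partner p i) = i]) /\
  (forall a b, 1 <= a -> a < b -> b < partner p a -> partner p a < partner p b ->
     partner p b <= 2 * n -> False).

Definition shift_up (k i : nat) : nat := if i < k then i else i.+2.

Definition l_ins (k : nat) (p : seq nat) : seq nat :=
  mkseq (fun j0 =>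
           let j := j0.+1 in
           if j == k then k.+1
           else if j == k.+1 then k
           else let i := (if j < k then j else j - 2) in
                shift_up k (partner p i))
        (size p).+2.

Definition shift_down (k i : nat) : nat := if i < k then i else i - 2.

Definition remove_arc (k : nat) (p : seq nat) : seq nat :=
  mkseq (fun j0 =>
           let j := j0.+1 in
           let i := (if j < k then j else j.+2) in
           shift_down k (partner p i))
        (size p - 2).

Definition first_short_arc (p : seq nat) : nat :=
  let s := iota 1 (size p) in
  nth 0 s (find (fun k => partner p k == k.+1) s).

Fixpoint restr_aux (m : nat) (p : seq nat) : seq nat :=
  match m with
  | 0 => [::]
  | m'.+1 => let k := first_short_arc p in k :: restr_aux m' (remove_arc k p)
  end.

(* restricted sequence (k_n, k_(n-1), ..., k_1) of a matching in D_n,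
   stored as a list with head k_n *)
Definition restricted_seq (p : seq nat) : seq nat := restr_aux (size p %/ 2) p.

(* a_i, 1 <= i <= n, of the restricted sequence (a_n, ..., a_1) *)
Definition rs_entry (p : seq nat) (i : nat) : nat :=
  nth 0 (restricted_seq p) (size p %/ 2 - i).

Definition prec (a b : seq nat) : Prop :=
  forall i, 1 <= i <= size a %/ 2 -> rs_entry a i <= rs_entry b i.

Example ex1 : restricted_seq [:: 4; 3; 2; 1; 6; 5] = [:: 2; 1; 1]. Proof. by []. Qed.
Example ex2 : l_ins 2 [:: 2; 1] = [:: 4; 3; 2; 1]. Proof. by []. Qed.
Example ex3 : remove_arc 2 [:: 4; 3; 2; 1] = [:: 2; 1]. Proof. by []. Qed.

(* Main.v *)
Require Import Defs.
From mathcomp Require Import all_boot.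
From mathcomp Require Import zify.
Set Implicit Arguments. Unset Strict Implicit.

Ltac ar := rewrite /shift_up /shift_down; repeat case: ifP; lia.

Lemma size_l_ins k p : size (l_ins k p) = (size p).+2.
Proof. by rewrite size_mkseq. Qed.

Lemma size_remove_arc k p : size (remove_arc k p) = size p - 2.
Proof. by rewrite size_mkseq. Qed.

Lemma partner_l_ins k p j : 1 <= j <= (size p).+2 ->
  partner (l_ins k p) j = if j == k then k.+1 else if j == k.+1 then k
     else shift_up k (partner p (shift_down k j)).
Proof.
move=> hj; rewrite /partner /l_ins nth_mkseq /=; last lia.
by have -> : j.-1.+1 = j by lia.
Qed.

Lemma partner_remove_arc k p j : 1 <= j <= size p - 2 ->
  partner (remove_arc k p) j = shift_down k (partner p (shift_up k j)).
Proof.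
move=> hj; rewrite /partner /remove_arc nth_mkseq /=; last lia.
by have -> : j.-1.+1 = j by lia.
Qed.

Lemma eq_partner p q : size p = size q ->
  (forall j, 1 <= j <= size p -> partner p j = partner q j) -> p = q.
Proof.
move=> hs h; apply: (eq_from_nth (x0:=0)) => // i hi.
have := h i.+1; rewrite /partner /=; apply; lia.
Qed.

Lemma find_spec_eq (T : Type) (P : pred T) x0 (s : seq T) i :
  i < size s -> P (nth x0 s i) -> (forall j, j < i -> ~~ P (nth x0 s j)) ->
  find P s = i.
Proof.
elim: s i => [|x s IH] [|i] //= hi hP hj.
- by rewrite hP.
- rewrite (negbTE (hj 0 _)) //; congr S; apply: IH => // j hj'.
  exact: (hj j.+1).
Qed.

Lemma fsa_eq p f : 1 <= f < size p -> partner p f = f.+1 ->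
  (forall j, 1 <= j < f -> partner p j != j.+1) -> first_short_arc p = f.
Proof.
move=> hf hp hj; rewrite /first_short_arc.
rewrite (@find_spec_eq _ _ 0 _ f.-1).
- rewrite nth_iota; lia.
- rewrite size_iota; lia.
- rewrite nth_iota; last lia.
  have -> : 1 + f.-1 = f by lia.
  by rewrite hp.
- move=> j hj'; rewrite nth_iota; last lia.
  apply: hj; lia.
Qed.

Lemma short_arc_exists n p : is_NCM n p -> 0 < n ->
  exists f, [&& 1 <= f, f < 2 * n & partner p f == f.+1].
Proof.
case=> hs [hi hc] hn.
suff H : forall d a, 1 <= a -> a + d = partner p a -> a + d <= 2 * n -> 0 < d ->
   exists f, [&& 1 <= f, f < 2 * n & partner p f == f.+1].
  have [h1 h2 h3] := hi 1 ltac:(lia).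
  apply: (H (partner p 1 - 1) 1); lia.
elim/ltn_ind => d IH a ha had hle hd.
case: (eqVneq d 1) => [e|d1].
  exists a; apply/and3P; split; try lia; apply/eqP; lia.
have [c1 c2 c3] := hi a.+1 ltac:(lia).
have [a1 a2 a3] := hi a ltac:(lia).
have e : partner p (a + d) = a by rewrite had a3.
case: (ltngtP (partner p a.+1) a.+1) => hca.
- case: (eqVneq (partner p a.+1) a) => [ea|na].
  + move: c3; rewrite ea => c3; lia.
  + exfalso; apply: (hc (partner p a.+1) a); rewrite ?c3; lia.
- case: (ltngtP (partner p a.+1) (a + d)) => hcd.
  + apply: (IH (partner p a.+1 - a.+1) _ a.+1); lia.
  + exfalso; apply: (hc a a.+1); lia.
  + move: c3; rewrite hcd e; lia.
- lia.
Qed.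

Lemma fsa_props n p : is_NCM n p -> 0 < n ->
  [/\ 1 <= first_short_arc p, first_short_arc p < 2 * n,
      partner p (first_short_arc p) = (first_short_arc p).+1 &
      forall j, 1 <= j < first_short_arc p -> partner p j != j.+1].
Proof.
move=> hp hn; have hex := short_arc_exists hp hn.
have [m /and3P[m1 m2 /eqP m3] minm] := ex_minnP hex.
have hs : size p = 2 * n by case: hp.
rewrite (@fsa_eq p m); first split => //.
- move=> j hj; apply/eqP => ej.
  have := minm j; rewrite ej eqxx; lia.
- lia.
- done.
- move=> j hj; apply/eqP => ej.
  have := minm j; rewrite ej eqxx; lia.
Qed.

Lemma partner_avoid n p f i : is_NCM n p -> 1 <= f < 2 * n -> partner p f = f.+1 ->
  1 <= i <= 2 * n -> i != f -> i != f.+1 ->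
  [/\ 1 <= partner p i <= 2 * n, partner p i != f, partner p i != f.+1 &
      partner p (partner p i) = i].
Proof.
case=> hs [hi hc] hf hpf hi' n1 n2.
have [h1 h2 h3] := hi i hi'.
have [g1 g2 g3] := hi f ltac:(lia).
split => //.
- apply/eqP => e; move: h3; rewrite e hpf; lia.
- apply/eqP => e; move: h3 g3; rewrite e hpf => ->; lia.
Qed.

Lemma cross_map f a b xa xb n :
  xa != f -> xa != f.+1 -> xb != f -> xb != f.+1 ->
  1 <= a -> a < b -> b < shift_down f xa -> shift_down f xa < shift_down f xb ->
  shift_down f xb <= n ->
  [/\ 1 <= shift_up f a, shift_up f a < shift_up f b, shift_up f b < xa, xa < xb
     & xb <= n + 2].
Proof. rewrite /shift_up /shift_down; repeat case: ifP; move=> *; split; lia. Qed.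

Lemma remove_ncm n p f : is_NCM n.+1 p -> 1 <= f < 2 * n.+1 -> partner p f = f.+1 ->
  is_NCM n (remove_arc f p).
Proof.
move=> hp hf hpf; have hp' := hp; case: hp' => hs [hi hc].
have hsz : size (remove_arc f p) = 2 * n by rewrite size_remove_arc; lia.
have P : forall j, 1 <= j <= 2 * n ->
   partner (remove_arc f p) j = shift_down f (partner p (shift_up f j)).
  by move=> j hj; apply: partner_remove_arc; lia.
have X : forall j, 1 <= j <= 2 * n ->
  [/\ 1 <= partner p (shift_up f j) <= 2 * n.+1, partner p (shift_up f j) != f,
      partner p (shift_up f j) != f.+1 &
      partner p (partner p (shift_up f j)) = shift_up f j].
  move=> j hj; apply: (partner_avoid hp) => //; ar.
split => //; split.
- move=> i hi'; rewrite P //.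
  have [x1 x2 x3 x4] := X i hi'.
  move: x1 x2 x3 x4; set x := partner p (shift_up f i) => x1 x2 x3 x4.
  have r : 1 <= shift_down f x <= 2 * n by ar.
  have x5 : x != shift_up f i.
    by have [_ y _] := hi (shift_up f i) ltac:(ar).
  split => //.
  + move: x5; ar.
  + rewrite P //.
    have -> : shift_up f (shift_down f x) = x by ar.
    rewrite x4; ar.
- move=> a b ha hab hb hab2 hb2.
  have Pa := P a ltac:(lia). have Pb := P b ltac:(lia).
  rewrite Pa Pb in hb hab2 hb2.
  have [a1 a2 a3 a4] := X a ltac:(lia).
  have [b1 b2 b3 b4] := X b ltac:(lia).
  have [y1 y2 y3 y4 y5] := cross_map a2 a3 b2 b3 ha hab hb hab2 hb2.
  by apply: (hc (shift_up f a) (shift_up f b)); lia.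
Qed.

Lemma restr_size n p : size p = 2 * n -> restricted_seq p = restr_aux n p.
Proof. by move=> hs; rewrite /restricted_seq hs mulKn. Qed.

Lemma size_restr m p : size (restr_aux m p) = m.
Proof. by elim: m p => [|m IH] p //=; rewrite IH. Qed.

Lemma rs_cons n p : size p = 2 * n.+1 ->
  restricted_seq p = first_short_arc p :: restricted_seq (remove_arc (first_short_arc p) p).
Proof.
move=> hs; rewrite (restr_size hs) /= (@restr_size n) //.
rewrite size_remove_arc hs; lia.
Qed.

Fixpoint ins (k : nat) (s : seq nat) : seq nat :=
  match s with
  | [::] => [:: k]
  | a :: s' => if a.+2 <= k then a :: ins (k - 2) s' else k :: s
  end.

Lemma sdsu a k x : a.+2 <= k -> x != a -> x != a.+1 ->
  shift_down a (shift_up k x) = shift_up (k-2) (shift_down a x).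
Proof. ar. Qed.

Lemma L1 n : forall p k, is_NCM n p -> 1 <= k <= 2 * n + 1 ->
  restricted_seq (l_ins k p) = ins k (restricted_seq p).
Proof.
elim: n => [|n IH] p k hp hk.
  case: hp => hs _; case: p hs => // _.
  by have -> : k = 1 by lia.
have [f1 f2 f3 f4] := fsa_props hp ltac:(done).
move: f1 f2 f3 f4; set a := first_short_arc p => f1 f2 f3 f4.
have hs : size p = 2 * n.+1 by case: hp.
have hrp : restricted_seq p = a :: restricted_seq (remove_arc a p) by exact: (rs_cons hs).
have hsl : size (l_ins k p) = 2 * n.+2 by rewrite size_l_ins hs; lia.
have hp' := remove_ncm (f:=a) hp ltac:(lia) f3.
have [_ [hi _]] := hp.
rewrite (rs_cons hsl) hrp /=.
case: ifP => hak.
- rewrite (@fsa_eq _ a); first last.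
  + move=> j hj; rewrite partner_l_ins; last lia.
    have -> : shift_down k j = j by ar.
    have := f4 j hj; move: (partner p j) => x; ar.
  + rewrite partner_l_ins; last lia.
    have -> : shift_down k a = a by ar.
    rewrite f3; ar.
  + lia.
  congr (_ :: _).
  rewrite -(IH _ (k - 2) hp'); last lia.
  congr restricted_seq; apply: eq_partner.
    by rewrite !size_l_ins !size_remove_arc size_l_ins hs; lia.
  move=> j; rewrite size_remove_arc size_l_ins hs => hj.
  rewrite partner_remove_arc; last by rewrite size_l_ins hs; lia.
  rewrite partner_l_ins; last by rewrite hs; ar.
  rewrite partner_l_ins; last by rewrite size_remove_arc hs; lia.
  case: (eqVneq j (k - 2)) => [ej|nj1].
    have -> : shift_up a j = k by ar.
    rewrite eqxx; ar.
  case: (eqVneq j (k - 2).+1) => [ej|nj2].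
    have -> : shift_up a j = k.+1 by ar.
    rewrite eqxx; have -> : (k.+1 == k) = false by lia. ar.
  have -> : (shift_up a j == k) = false by ar.
  have -> : (shift_up a j == k.+1) = false by ar.
  rewrite partner_remove_arc; last by rewrite hs; ar.
  have -> : shift_down k (shift_up a j) = shift_up a (shift_down (k - 2) j) by ar.
  have [x1 x2 x3 x4] := partner_avoid (f:=a) hp (i := shift_up a (shift_down (k - 2) j))
      ltac:(lia) f3 ltac:(ar) ltac:(ar) ltac:(ar).
  by rewrite sdsu.
- rewrite (@fsa_eq _ k); first last.
  + move=> j hj; rewrite partner_l_ins; last lia.
    have -> : shift_down k j = j by ar.
    have hx : (partner p j != j.+1) || (partner p j == k).
      case: (ltnP j a) => hja.
        by rewrite f4 //; lia.
      have -> : j = a by lia.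
      by rewrite f3; apply/orP; right; apply/eqP; lia.
    move: hx; move: (partner p j) => x; ar.
  + rewrite partner_l_ins ?eqxx //; lia.
  + lia.
  congr (_ :: _); rewrite -hrp; congr restricted_seq.
  apply: eq_partner.
    by rewrite size_remove_arc size_l_ins; lia.
  move=> j; rewrite size_remove_arc size_l_ins => hj.
  rewrite partner_remove_arc; last by rewrite size_l_ins; lia.
  rewrite partner_l_ins; last by ar.
  have -> : (shift_up k j == k) = false by ar.
  have -> : (shift_up k j == k.+1) = false by ar.
  have -> : shift_down k (shift_up k j) = j by ar.
  move: (partner p j) => x; ar.
Qed.

Definition R (x y : nat) := x <= y.+1.

Lemma rs_chain n p : is_NCM n p -> sorted R (restricted_seq p).
Proof.
elim: n p => [|n IH] p hp.
  by case: hp => hs _; rewrite (restr_size hs).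
have hs : size p = 2 * n.+1 by case: hp.
have [f1 f2 f3 f4] := fsa_props hp ltac:(done).
move: f1 f2 f3 f4; set a := first_short_arc p => f1 f2 f3 f4.
have hp' := remove_ncm (f:=a) hp ltac:(lia) f3.
rewrite (rs_cons hs) -/a /=.
have IH' := IH _ hp'.
destruct n as [|n].
  have hs' : size (remove_arc a p) = 2 * 0 by case: hp'.
  by rewrite (restr_size hs').
have hs' : size (remove_arc a p) = 2 * n.+1 by case: hp'.
move: IH'; rewrite (rs_cons hs') /= => ->; rewrite andbT /R.
have [g1 g2 g3 g4] := fsa_props hp' ltac:(done).
move: g1 g2 g3 g4; set a' := first_short_arc (remove_arc a p) => g1 g2 g3 g4.
rewrite leqNgt; apply/negP => lt.
move: g3; rewrite partner_remove_arc; last by rewrite hs; lia.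
have -> : shift_up a a' = a' by ar.
have := f4 a' ltac:(lia).
have [x1 x2 x3 x4] := partner_avoid (f:=a) hp (i := a') ltac:(lia) f3 ltac:(lia) ltac:(lia) ltac:(lia).
move: x1 x2 x3 x4; move: (partner p a') => x; ar.
Qed.

Lemma compA s t m b : size s = size t -> all2 leq s t -> path R b t -> m < b ->
  all2 leq (ins m s) (b :: t).
Proof.
elim: s t m b => [|a s IH] [|b' t] m b //= hs.
  by move=> _ _ h; rewrite ?andbT; lia.
move=> /andP[hab hst] /andP[hbb ht] hmb.
rewrite /R in hbb.
case: ifP => ham /=.
  apply/andP; split; first lia.
  apply: IH => //; [by case: hs | lia].
by rewrite hab hst /=; apply/andP; split; lia.
Qed.

Lemma compB s t m b : size s = size t -> path R b t -> m < b ->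
  all2 leq (ins m s) (b :: t) -> all2 leq s t.
Proof.
elim: s t m b => [|a s IH] [|b' t] m b //= hs.
move=> /andP[hbb ht] hmb.
rewrite /R in hbb.
case: ifP => ham /=.
  move=> /andP[h1 h2]; apply/andP; split; first lia.
  apply: (IH t (m - 2) b') => //; [by case: hs | lia].
by move=> /andP[_ ->].
Qed.

Lemma comb s t k : size s = size t -> sorted R t ->
  all2 leq s t = all2 leq (ins k s) (ins k t).
Proof.
elim: s t k => [|a s IH] [|b t] k //= hs.
  by rewrite leqnn.
move=> ht.
have ht' : sorted R t by apply: path_sorted ht.
case: ifP => hak; case: ifP => hbk /=.
- by rewrite (IH t (k - 2)) //; case: hs.
- have -> : a <= b by lia.
  have -> : a <= k by lia.
  apply/idP/idP.
    by move=> h; apply: compA => //; [case: hs | lia].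
  by move=> h; apply: (compB (m := k - 2) (b := b)) => //; [case: hs | lia].
- have -> : a <= b = false by lia.
  have -> : k <= b = false by lia.
  done.
- by rewrite leqnn.
Qed.

Lemma all2_nth s t : size s = size t ->
  all2 leq s t <-> forall j, j < size s -> nth 0 s j <= nth 0 t j.
Proof.
elim: s t => [|a s IH] [|b t] //= hs.
case: hs => hs; split.
  move=> /andP[h1 h2] [|j] //= hj.
  exact: (proj1 (IH t hs) h2).
move=> h; apply/andP; split; first exact: (h 0).
by apply: (proj2 (IH t hs)) => j hj; apply: (h j.+1).
Qed.

Lemma prec_all2 n a b : size a = 2 * n -> size b = 2 * n ->
  prec a b <-> all2 leq (restricted_seq a) (restricted_seq b).
Proof.
move=> ha hb.
rewrite (all2_nth _); last by rewrite (restr_size ha) (restr_size hb) !size_restr.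
rewrite /prec /rs_entry ha hb mulKn // (restr_size ha) (restr_size hb) size_restr.
split.
  move=> H j hj; have := H (n - j) ltac:(lia).
  by have -> : n - (n - j) = j by lia.
move=> H i hi; apply: H; lia.
Qed.

Theorem mainTheorem9 (n : nat) (alpha beta : seq nat) (k : nat) :
  is_NCM n alpha -> is_NCM n beta -> 1 <= k <= 2 * n + 1 ->
  (prec alpha beta <-> prec (l_ins k alpha) (l_ins k beta)).
Proof.
move=> ha hb hk.
have sa : size alpha = 2 * n by case: ha.
have sb : size beta = 2 * n by case: hb.
have sla : size (l_ins k alpha) = 2 * n.+1 by rewrite size_l_ins sa; lia.
have slb : size (l_ins k beta) = 2 * n.+1 by rewrite size_l_ins sb; lia.
have E1 := prec_all2 sa sb.
have E2 := prec_all2 sla slb.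
rewrite (L1 ha hk) (L1 hb hk) -comb in E2.
- tauto.
- by rewrite (restr_size sa) (restr_size sb) !size_restr.
- exact: rs_chain hb.
Qed.
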